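(* Let $H_\alpha=-\Delta_\alpha+V$ be the Schrödinger operator with a periodic magnetic potential $\alpha$ and a periodic electric potential $V$ on a periodic graph $\mathcal G$. Then all spectral bands of $H_\alpha$ are degenerate (i.e. each is a single point) if and only if $\mathcal T_{\alpha,n,\mathrm m}=0$ for all $(n,\mathrm m)\in\{1,\dots,\nu\}\times(\mathbb Z^d\setminus\{0\})$, where $\mathcal T_{\alpha,n,\mathrm m}=\sum_{\mathbf c\in\widetilde{\mathcal C}_n^{\mathrm m}}\omega(\mathbf c)e^{-i\alpha(\mathbf c)}$.
   Context: Let $\Gamma\subset\mathbb R^d$ be a lattice with basis $\mathfrak a_1,\dots,\mathfrak a_d$ and fundamental cell $\Omega=\{\sum_sx_s\mathfrak a_s:(x_s)\in[0,1)^d\}$. Let $\mathcal G=(\mathcal V,\mathcal E)$ be a connected, locally finite, infinite graph embedded in $\mathbb R^d$ (loops, multiple edges allowed), invariant under $\Gamma$-translations, with finite quotient $\mathcal G_*=(\mathcal V_*,\mathcal E_* )$; $\nu=\#\mathcal V_*$. Oriented edges $\mathcal A,\mathcal A_*$; $\underline{\mathbf e}$ inverse; $\varkappa_x$ = number of oriented edges starting at $x$. Edge index: $x=x_0+[x]$, $x_0\in\mathcal V\cap\Omega$, $[x]\in\Gamma$ with coordinates $[x]_{\mathbb A}\in\mathbb Z^d$; $\tau((x,y))=[y]_{\mathbb A}-[x]_{\mathbb A}$, defined on $\mathcal A_*$. Periodic magnetic potential $\alpha:\mathcal A\to\mathbb R$ ($\alpha(\underline{\mathbf e})=-\alpha(\mathbf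 e)$, $\Gamma$-invariant); $V$ real $\Gamma$-periodic. $H_\alpha=-\Delta_\alpha+V$, $\Delta_\alpha=\varkappa-A_\alpha$, $(A_\alpha f)_x=\sum_{\mathbf e=(x,y)\in\mathcal A}e^{i\alpha(\mathbf e)}f_y$. Fiber operators $H_\alpha(k)=A_\alpha(k)-\varkappa+V$ on $\mathbb C^\nu$, $(A_\alpha(k)f)_x=\sum_{\mathbf e=(x,y)\in\mathcal A_*}e^{i(\alpha(\mathbf e)+\langle\tau(\mathbf e),k\rangle)}f_y$, $k\in\mathbb T^d=\mathbb R^d/(2\pi\mathbb Z)^d$, eigenvalues $\lambda_{\alpha,1}(k)\le\dots\le\lambda_{\alpha,\nu}(k)$; spectral bands $\sigma_j(H_\alpha)=\lambda_{\alpha,j}(\mathbb T^d)$. Cycles: ordered sequences of oriented edges $(\mathbf e_1,\dots,\mathbf e_n)$, $\mathbf e_s=(x_{s-1},x_s)$, $x_n=x_0$ (cyclic shifts distinct, backtracking allowed); index $\tau(\mathbf c)=\sum\tau(\mathbf e)$, flux $\alpha(\mathbf c)=(\sum\alpha(\mathbf e))\bmod2\pi$. Modified graph $\widetilde{\mathcal G}_*$: add at each $x\in\mathcal V_*$ one oriented loop $\mathbf e_x$ (single oriented edge) with $\tau(\mathbf e_x)=0$, $\alpha(\mathbf e_x)=0$; $\omega(\mathbf e)=1$ for $\mathbf e\in\mathcal A_*$, $\omega(\mathbf e_x)=V_x-\varkappa_x$, $\omega(\mathbf c)=\prod_s\omega(\mathbf e_s)$; $\widetilde{\mathcal C}_n^{\mathrm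 m}$ is the set of cycles of $\widetilde{\mathcal G}_*$ of length $n$ and index $\mathrm m$. *)

(* Defs.v *)
From HB Require Import structures.
From mathcomp Require Import all_boot all_order all_algebra.
From mathcomp Require Import complex.
From mathcomp Require Import classical_sets reals trigo.
From Stdlib Require Import Relations.

Set Implicit Arguments.
Unset Strict Implicit.
Unset Printing Implicit Defensive.

Import Order.TTheory GRing.Theory Num.Theory.
Local Open Scope ring_scope.
Local Open Scope complex_scope.

Definition expi (R : realType) (x : R) : R[i] := (cos x) +i* (sin x).

Section PeriodicGraph.
Variables (R : realType) (nu d : nat) (E : finType).
(* Quotient graph data: oriented edges E of G_*, with source, target,
   inverse edge, edge index tau, magnetic potential alpha; electric
   potential V on the vertices 'I_nu. *)
Variables (src tgt : E -> 'I_nu) (inv : E -> E) (tau : E -> 'rV[int]_d)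
  (alpha : E -> R) (V : 'I_nu -> R).

Definition quotient_data_ok : Prop :=
  [/\ forall e, inv (inv e) = e,
      forall e, inv e != e,
      forall e, src (inv e) = tgt e /\ tgt (inv e) = src e,
      forall e, tau (inv e) = - tau e &
      forall e, alpha (inv e) = - alpha e].

(* The periodic graph G itself: vertices x_0 + [x], coded as pairs
   (x_0, [x]_A) in 'I_nu * Z^d; each quotient oriented edge e and each
   a in Z^d gives the edge (src e, a) -> (tgt e, a + tau e). *)
Definition pvertex := ('I_nu * 'rV[int]_d)%type.
Definition padj (u v : pvertex) : Prop :=
  exists e, src e = u.1 /\ tgt e = v.1 /\ v.2 = u.2 + tau e.
Definition pconnected : Prop :=
  forall u v : pvertex, clos_refl_trans pvertex padj u v.

Definition kappa (x : 'I_nu) : nat := #|[set e | src e == x]|.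

Definition pairing (m : 'rV[int]_d) (k : 'I_d -> R) : R :=
  \sum_(s < d) (m 0 s)%:~R * k s.

(* fiber operator H_alpha(k) = A_alpha(k) - kappa + V *)
Definition Hk (k : 'I_d -> R) : 'M[R[i]]_nu :=
  \matrix_(x, y) ((\sum_(e | (src e == x) && (tgt e == y))
                     expi (alpha e + pairing (tau e) k))
                  + (if x == y then (V x - (kappa x)%:R)%:C else 0)).

Definition sorted_spectrum (n : nat) (A : 'M[R[i]]_n) (s : seq R) : Prop :=
  sorted <=%R s /\ char_poly A = \prod_(r <- s) ('X - (r%:C)%:P).

(* lambda_{alpha,j}(k), j = 0..nu-1 (0-based) *)
Definition lam (k : 'I_d -> R) (j : nat) : R :=
  nth 0 (xget [::] [set s | sorted_spectrum (Hk k) s]) j.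

Definition band_degenerate (j : nat) : Prop :=
  exists c : R, forall k : 'I_d -> R, lam k j = c.

(* Modified quotient graph: original oriented edges plus one loop per vertex *)
Definition medge := (E + 'I_nu)%type.
Definition msrc (e : medge) : 'I_nu := match e with inl e => src e | inr x => x end.
Definition mtgt (e : medge) : 'I_nu := match e with inl e => tgt e | inr x => x end.
Definition mtau (e : medge) : 'rV[int]_d := match e with inl e => tau e | inr _ => 0 end.
Definition malpha (e : medge) : R := match e with inl e => alpha e | inr _ => 0 end.
Definition momega (e : medge) : R :=
  match e with inl _ => 1 | inr x => V x - (kappa x)%:R end.

Definition is_mcycle (n : nat) (c : {ffun 'I_n.+1 -> medge}) : bool :=
  [forall s : 'I_n.+1, mtgt (c s) == msrc (c (ordS s))].
Definition cyc_tau n (c : {ffun 'I_n.+1 -> medge}) : 'rV[int]_d :=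
  \sum_(s < n.+1) mtau (c s).
Definition cyc_alpha n (c : {ffun 'I_n.+1 -> medge}) : R :=
  \sum_(s < n.+1) malpha (c s).
Definition cyc_omega n (c : {ffun 'I_n.+1 -> medge}) : R :=
  \prod_(s < n.+1) momega (c s).

(* T_{alpha, n+1, m} = sum over cycles of length n+1 and index m of
   omega(c) e^{-i alpha(c)} *)
Definition Tcoef (n : nat) (m : 'rV[int]_d) : R[i] :=
  \sum_(c : {ffun 'I_n.+1 -> medge} | is_mcycle c && (cyc_tau c == m))
     (cyc_omega c)%:C * expi (- cyc_alpha c).

End PeriodicGraph.

(* Main.v *)
Require Import Defs.
From HB Require Import structures.
From mathcomp Require Import all_boot all_order all_algebra.
From mathcomp Require Import complex.
From mathcomp Require Import classical_sets reals trigo.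
From mathcomp Require Import ring zify.
Import Order.TTheory GRing.Theory Num.Theory.
Set Implicit Arguments.
Unset Strict Implicit.
Unset Printing Implicit Defensive.
Local Open Scope ring_scope.
Local Open Scope complex_scope.
Unset Strict Implicit.

Section Newton.
Variable F : numFieldType.
Definition Ps (s : seq F) : {poly F} := \prod_(x <- s) ('X - x%:P).
Definition psum (s : seq F) (r : nat) : F := \sum_(x <- s) x ^+ r.

Lemma size_Ps s : size (Ps s) = (size s).+1.
Proof. by rewrite /Ps size_prod_XsubC. Qed.

Lemma coef_XsubCM (x : F) (q : {poly F}) k :
  (('X - x%:P) * q)`_k = (if k is k'.+1 then q`_k' else 0) - x * q`_k.
Proof. by rewrite mulrBl coefB coefXM coefCM; case: k. Qed.

Lemma newton0 s N : (size s < N)%N -> \sum_(k < N) (Ps s)`_k * psum s k = 0.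
Proof.
move=> hN.
transitivity (\sum_(x <- s) (Ps s).[x]).
  rewrite (eq_bigr (fun k : 'I_N => \sum_(x <- s) (Ps s)`_k * x ^+ k)); last first.
    by move=> k _; rewrite /psum mulr_sumr.
  rewrite exchange_big /=; apply: eq_bigr => x _.
  by rewrite (@horner_coef_wide _ N) // size_Ps.
by rewrite big_seq big1 // => x xs; apply/eqP; rewrite -/(root _ x) root_prod_XsubC.
Qed.

Lemma newton0' s N : (size s < N)%N ->
  0%:R * (Ps s)`_0 = \sum_(i < N) (Ps s)`_(i + 0) * psum s i.
Proof.
move=> hN; transitivity (\sum_(i < N) (Ps s)`_i * psum s i).
  by rewrite newton0 // mul0r.
by apply: eq_bigr => i _; rewrite addn0.
Qed.

Lemma newton s N j : (size s < N)%N ->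
  j%:R * (Ps s)`_j = \sum_(i < N) (Ps s)`_(i + j) * psum s i.
Proof.
case: j => [|j] hN.
  exact: newton0'.
elim: s hN j => [|x t IH] hN j.
  rewrite /Ps big_nil coef1 /= mulr0 big1 // => i _.
  by rewrite coef1 addnS /= mul0r.
rewrite /= in hN.
have IHt : forall j, j%:R * (Ps t)`_j = \sum_(i < N) (Ps t)`_(i + j) * psum t i.
  case=> [|j']; last by apply: IH; exact: ltnW.
  exact: newton0' (ltnW hN).
have PsE : Ps (x :: t) = ('X - x%:P) * Ps t by rewrite /Ps big_cons.
have psE : forall i, psum (x :: t) i = x ^+ i + psum t i by move=> i; rewrite /psum big_cons.
rewrite PsE coef_XsubCM.
rewrite (eq_bigr (fun i : 'I_N => ((Ps t)`_(i + j) * x ^+ i - x * ((Ps t)`_(i + j.+1) * x ^+ i))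
     + ((Ps t)`_(i + j) * psum t i - x * ((Ps t)`_(i + j.+1) * psum t i)))); last first.
  move=> i _; rewrite coef_XsubCM addnS psE; ring.
rewrite big_split /= !sumrB -!mulr_sumr -IHt -IHt.
clear IH; case: N hN IHt => // N hN IHt.
rewrite big_ord_recl big_ord_recr /= add0n expr0 mulr1.
have -> : (Ps t)`_(N + j.+1) = 0.
  by apply: nth_default; rewrite size_Ps; move: hN; rewrite ltnS; lia.
rewrite mul0r addr0.
rewrite (eq_bigr (fun i : 'I_N => x * ((Ps t)`_(i + j.+1) * x ^+ i))); last first.
  by move=> i _; rewrite /bump /= add1n addSnnS exprS; ring.
rewrite -mulr_sumr.
rewrite -natr1; ring.
Qed.


Lemma Ps_perm s t : Ps s = Ps t -> perm_eq s t.
Proof.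
elim: s t => [|x s IH] t.
  move=> h; have := size_Ps t; rewrite -h size_Ps /=.
  by case: t h.
move=> h.
have xt : x \in t.
  by rewrite -root_prod_XsubC -/(Ps t) -h /Ps big_cons rootM root_XsubC eqxx.
have h2 : Ps s = Ps (rem x t).
  have hx : ('X - x%:P) != 0 :> {poly F} by rewrite polyXsubC_eq0.
  apply: (mulfI hx).
  have e1 : Ps (x :: s) = ('X - x%:P) * Ps s by rewrite /Ps big_cons.
  have e2 : Ps t = ('X - x%:P) * Ps (rem x t).
    by rewrite /Ps (perm_big _ (perm_to_rem xt)) big_cons.
  by rewrite -e1 -e2.
rewrite perm_sym (permPl (perm_to_rem xt)) perm_cons perm_sym.
exact: IH.
Qed.

Lemma psum_Ps s t : Ps s = Ps t -> forall r, psum s r = psum t r.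
Proof. by move=> /Ps_perm h r; rewrite /psum (perm_big _ h). Qed.

Lemma Ps_psum s t : size s = size t ->
  (forall r, (0 < r <= size s)%N -> psum s r = psum t r) -> Ps s = Ps t.
Proof.
move=> hst hp; set n := size s.
have cs : forall (u : seq F) j, size u = n -> (n <= j)%N -> (Ps u)`_j = (j == n)%:R.
  move=> u j hu hj; have : Ps u \is monic by apply: monic_prod_XsubC.
  move=> /monicP.
  rewrite lead_coefE size_Ps hu /=.
  case: eqP => [->|hne] // _; apply: nth_default; rewrite size_Ps hu.
  by move: hj hne; lia.
have key : forall m j, (n - m <= j)%N -> (Ps s)`_j = (Ps t)`_j.
  elim=> [|m IH] j hj.
    by rewrite subn0 in hj; rewrite !cs.
  have [hj'|hj'] := leqP (n - m) j; first exact: IH.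
  have jn : (j < n)%N by move: hj'; lia.
  have e := @newton s n.+1 j (ltnSn _).
  have ht : (size t < n.+1)%N by rewrite -hst.
  have e2 := @newton t n.+1 j ht.
  rewrite big_ord_recl /= add0n in e; rewrite big_ord_recl /= add0n in e2.
  have ps0 : forall u : seq F, psum u 0 = (size u)%:R.
    move=> u; rewrite /psum (eq_bigr (fun _ => 1)); last by move=> ? _; rewrite expr0.
    elim: u => [|y u IHu]; first by rewrite big_nil.
    by rewrite big_cons IHu /= -add1n natrD.
  have : \sum_(i < n) (Ps s)`_(bump 0 i + j) * psum s (bump 0 i) =
         \sum_(i < n) (Ps t)`_(bump 0 i + j) * psum t (bump 0 i).
    apply: eq_bigr => i _; rewrite IH; last by rewrite /bump /=; lia.
    by rewrite hp // /bump /=; move: (ltn_ord i); rewrite /n; lia.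
  move=> hs.
  have : (j%:R - n%:R) * (Ps s)`_j = (j%:R - n%:R) * (Ps t)`_j :> F.
    rewrite !mulrBl e e2 hs !ps0 -hst -/n; ring.
  apply: mulfI; rewrite subr_eq0 eqr_nat; move: jn; lia.
apply/polyP => j; apply: (key n); lia.
Qed.

End Newton.
Section Spec.
Variable C : numClosedFieldType.

Lemma char_poly_conj n (P M : 'M[C]_n) : P \in unitmx ->
  char_poly (invmx P *m M *m P) = char_poly M.
Proof.
move=> Pu.
set Q := map_mx polyC P; set Qi := map_mx polyC (invmx P).
have QiQ : Qi *m Q = 1%:M by rewrite -map_mxM mulVmx // map_mx1.
have e : char_poly_mx (invmx P *m M *m P) = Qi *m char_poly_mx M *m Q.
  rewrite /char_poly_mx !map_mxM -/Q -/Qi mulmxBr mulmxBl.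
  by rewrite scalar_mxC -(mulmxA _ Qi) QiQ mulmx1.
by rewrite /char_poly e !det_mulmx mulrAC -det_mulmx QiQ det1 mul1r.
Qed.

Lemma diag_expr n (D : 'rV[C]_n) r :
  (diag_mx D) ^+ r = diag_mx (map_mx (fun x => x ^+ r) D).
Proof.
elim: r => [|r IH].
  by apply/matrixP => i j; rewrite expr0 !mxE; case: eqP => [->|]; rewrite ?expr0.
rewrite exprS IH -mulmxE mul_diag_mx; apply/matrixP => i j; rewrite !mxE.
by case: eqP => [->|_]; rewrite ?mulr0n ?mulr0 ?mulr1n ?exprS.
Qed.

Lemma conj_expr n (P M : 'M[C]_n) r : P \in unitmx ->
  (invmx P *m M *m P) ^+ r = invmx P *m M ^+ r *m P.
Proof.
move=> Pu; elim: r => [|r IH].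
  by rewrite !expr0 -idmxE mulmx1 mulVmx.
rewrite exprS IH -!mulmxE !mulmxA -[invmx P *m M *m P *m invmx P]mulmxA mulmxV //.
by rewrite mulmx1 exprS -mulmxE mulmxA.
Qed.

Lemma tr_conj n (P M : 'M[C]_n) : P \in unitmx -> \tr (invmx P *m M *m P) = \tr M.
Proof. by move=> Pu; rewrite -mulmxA mxtrace_mulC -mulmxA mulmxV // mulmx1. Qed.

Variable R : numFieldType.
End Spec.
Section Herm.
Variable R : realType.

Definition spec_list n (A : 'M[R[i]]_n) : seq R :=
  [seq complex.Re (spectral_diag A 0 i) | i <- enum 'I_n].

Lemma spec_listC n (A : 'M[R[i]]_n) : A \is hermsymmx ->
  [seq x%:C | x <- spec_list A] = [seq spectral_diag A 0 i | i <- enum 'I_n].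
Proof.
move=> hA; rewrite /spec_list -map_comp; apply: eq_map => i /=.
apply: RRe_real; have /mxOverP := hermitian_spectral_diag_real hA; exact.
Qed.

Lemma herm_eq n (A : 'M[R[i]]_n) : A \is hermsymmx ->
  A = invmx (spectralmx A) *m diag_mx (spectral_diag A) *m spectralmx A.
Proof. by move=> /hermitian_normalmx /orthomx_spectralP. Qed.

Lemma herm_char n (A : 'M[R[i]]_n) : A \is hermsymmx ->
  char_poly A = Ps [seq x%:C | x <- spec_list A].
Proof.
move=> hA; rewrite spec_listC // {1}(herm_eq hA) char_poly_conj ?spectral_unit //.
rewrite char_poly_trig ?diag_mx_is_trig // /Ps big_map big_enum /=.
by apply: eq_bigr => i _; rewrite mxE eqxx mulr1n.
Qed.

Lemma herm_tr n (A : 'M[R[i]]_n) r : A \is hermsymmx ->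
  \tr (A ^+ r) = psum [seq x%:C | x <- spec_list A] r.
Proof.
move=> hA; rewrite spec_listC // {1}(herm_eq hA) conj_expr ?spectral_unit //.
rewrite tr_conj ?spectral_unit // diag_expr mxtrace_diag /psum big_map big_enum /=.
by apply: eq_bigr => i _; rewrite mxE.
Qed.

Lemma size_spec_list n (A : 'M[R[i]]_n) : size (spec_list A) = n.
Proof. by rewrite size_map size_enum_ord. Qed.
End Herm.
Section Expi.
Variable R : realType.

Lemma expiD (a b : R) : expi (a + b) = expi a * expi b.
Proof. by rewrite /expi cosD sinD; apply/eqP; rewrite eq_complex /=; apply/andP; split; apply/eqP; ring. Qed.

Lemma expi0 : expi (0 : R) = 1.
Proof. by rewrite /expi cos0 sin0. Qed.

Lemma expiN (a : R) : expi (- a) = (expi a)^*.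
Proof. by rewrite /expi cosN sinN. Qed.

Lemma expi_neq0 (a : R) : expi a != 0.
Proof.
apply/negP => /eqP h; have := expiD a (- a).
by rewrite subrr expi0 h mul0r; apply/eqP; rewrite oner_eq0.
Qed.

Lemma expipi : expi (pi : R) = -1.
Proof. by rewrite /expi cospi sinpi; apply/eqP; rewrite eq_complex /= oppr0 !eqxx. Qed.

Variable d : nat.

Lemma pairingD (m1 m2 : 'rV[int]_d) (k : 'I_d -> R) : pairing (m1 + m2) k = pairing m1 k + pairing m2 k.
Proof. by rewrite /pairing -big_split; apply: eq_bigr => s _; rewrite mxE intrD mulrDl. Qed.

Lemma pairing0 (k : 'I_d -> R) : pairing (0 : 'rV[int]_d) k = 0 :> R.
Proof. by rewrite /pairing big1 // => s _; rewrite mxE mul0r. Qed.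

Lemma pairing_sum (I : finType) (P : pred I) (f : I -> 'rV[int]_d) (k : 'I_d -> R) :
  pairing (\sum_(i | P i) f i) k = \sum_(i | P i) pairing (f i) k.
Proof. exact: (big_morph (fun m => pairing m k) (fun m1 m2 => pairingD m1 m2 k) (pairing0 k)). Qed.

Lemma pairingN (m : 'rV[int]_d) (k : 'I_d -> R) : pairing (- m) k = - pairing m k :> R.
Proof.
by rewrite /pairing -sumrN; apply: eq_bigr => s _; rewrite mxE intrN mulNr.
Qed.

Lemma pairing_addk (m : 'rV[int]_d) (k h : 'I_d -> R) :
  pairing m (fun s => k s + h s) = pairing m k + pairing m h.
Proof. by rewrite /pairing -big_split; apply: eq_bigr => s _; rewrite mulrDr. Qed.

Definition chi (m : 'rV[int]_d) (k : 'I_d -> R) : R[i] := expi (- pairing m k).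

Lemma chi_add m k h : chi m (fun s => k s + h s) = chi m k * chi m h.
Proof. by rewrite /chi pairing_addk opprD expiD. Qed.

Lemma chi_neq0 m k : chi m k != 0.
Proof. exact: expi_neq0. Qed.

Lemma chi_sep (m m' : 'rV[int]_d) : m != m' -> exists h, chi m h != chi m' h.
Proof.
move=> hne.
have [s hs] : exists s, m 0 s != m' 0 s.
  apply/existsP; apply: contraR hne; rewrite negb_exists => /forallP h.
  by apply/eqP/rowP => s; move: (h s); rewrite negbK => /eqP.
set z : R := (m 0 s - m' 0 s)%:~R.
have hz : z != 0 by rewrite /z intr_eq0 subr_eq0.
pose h : 'I_d -> R := fun s' => if s' == s then pi / z else 0.
have ph : forall mm : 'rV[int]_d, pairing mm h = (mm 0 s)%:~R * (pi / z).
  move=> mm; rewrite /pairing (bigD1 s) //= big1 ?addr0 /h ?eqxx //.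
  by move=> s' /negbTE ->; rewrite mulr0.
exists h; apply/negP => /eqP e.
have : chi m h = - chi m' h.
  rewrite /chi.
  have -> : - pairing m h = - pairing m' h + (- pi).
    rewrite !ph; apply: (mulIf hz).
    have : (m 0 s)%:~R - (m' 0 s)%:~R = z :> R by rewrite /z intrB.
    move=> hzz; rewrite -hzz; field; rewrite hzz //.
  by rewrite expiD (expiN pi) expipi rmorphN1 mulrN1.
rewrite e => /eqP; rewrite -subr_eq0 opprK -mulr2n mulrn_eq0 /= => /eqP.
by apply/eqP; exact: chi_neq0.
Qed.

Lemma artin (ms : seq 'rV[int]_d) (a : 'rV[int]_d -> R[i]) : uniq ms ->
  (forall k, \sum_(m <- ms) a m * chi m k = 0) -> forall m, m \in ms -> a m = 0.
Proof.
elim: ms a => [|m0 ms IH] a //= /andP[m0n ums] hsum.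
have rest : forall m, m \in ms -> a m = 0.
  move=> m mms.
  have hne : m != m0 by apply: contraNneq m0n => <-.
  have [h hh] := chi_sep hne.
  have hb : forall k, \sum_(m1 <- ms) (a m1 * (chi m1 h - chi m0 h)) * chi m1 k = 0.
    move=> k.
    have e1 := hsum (fun s => k s + h s).
    have e2 := hsum k.
    rewrite big_cons in e1; rewrite big_cons in e2.
    have : (a m0 * chi m0 (fun s => k s + h s) + \sum_(j <- ms) a j * chi j (fun s => k s + h s))
       - chi m0 h * (a m0 * chi m0 k + \sum_(j <- ms) a j * chi j k) = 0.
      by rewrite e1 e2 mulr0 subr0.
    rewrite chi_add mulrDr opprD addrACA.
    have -> : a m0 * (chi m0 k * chi m0 h) - chi m0 h * (a m0 * chi m0 k) = 0 by ring.
    rewrite add0r mulr_sumr -sumrB => H; rewrite -[X in _ = X]H.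
    by apply: eq_bigr => j _; rewrite chi_add; ring.
  have := IH _ ums hb m mms; move/eqP; rewrite mulf_eq0 subr_eq0 (negbTE hh) orbF.
  by move/eqP.
move=> m; rewrite inE => /orP[/eqP ->|/rest //].
have := hsum (fun=> 0); rewrite big_cons big_seq big1; last by move=> m1 /rest ->; rewrite mul0r.
by rewrite addr0 => /eqP; rewrite mulf_eq0 (negbTE (chi_neq0 _ _)) orbF => /eqP.
Qed.
End Expi.
Section Graph.
Variables (R : realType) (nu d : nat) (E : finType).
Variables (src tgt : E -> 'I_nu) (inv : E -> E) (tau : E -> 'rV[int]_d)
  (alpha : E -> R) (V : 'I_nu -> R).

Definition wt (k : 'I_d -> R) (e : medge nu E) : R[i] :=
  (momega src V e)%:C * expi (malpha alpha e + pairing (mtau tau e) k).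

Definition Ue k (e : medge nu E) : 'M[R[i]]_nu :=
  wt k e *: delta_mx (msrc src e) (mtgt tgt e).

Lemma HkE k : Hk src tgt tau alpha V k = \sum_(e : medge nu E) Ue k e.
Proof.
apply/matrixP => x y; rewrite summxE !mxE big_sumType /=.
congr (_ + _).
  rewrite big_mkcond /=; apply: eq_bigr => e _; rewrite !mxE /= /wt /=.
  rewrite [x == _]eq_sym [y == _]eq_sym rmorph1 mul1r.
  by case: andP => _; rewrite ?mulr1 ?mulr0.
rewrite (bigD1 x) //= big1 ?addr0; last first.
  by move=> z /negbTE zx; rewrite !mxE eq_sym zx /= mulr0.
rewrite !mxE eqxx /= /wt /= pairing0 addr0 expi0 mulr1 [y == x]eq_sym.
by case: eqP => _; rewrite ?mulr1 ?mulr0.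
Qed.

Lemma tr_delta (x y : 'I_nu) : \tr (delta_mx x y : 'M[R[i]]_nu) = (x == y)%:R.
Proof.
rewrite /mxtrace (bigD1 x) //= big1 ?addr0; first by rewrite mxE eqxx.
by move=> z /negbTE zx; rewrite mxE zx.
Qed.

Lemma prodU k (f : nat -> medge nu E) m :
  \prod_(s < m.+1) Ue k (f s) =
  if all (fun s => mtgt tgt (f s) == msrc src (f s.+1)) (iota 0 m)
  then (\prod_(s < m.+1) wt k (f s)) *: delta_mx (msrc src (f 0)) (mtgt tgt (f m))
  else 0.
Proof.
elim: m => [|m IH]; first by rewrite !big_ord1.
have -> : iota 0 m.+1 = iota 0 m ++ [:: m] by rewrite -addn1 iotaD.
rewrite big_ord_recr /= IH [in RHS]big_ord_recr /= all_cat /= andbT.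
case: all; last by rewrite mul0r.
rewrite -mulmxE -scalemxAl -scalemxAr scalerA mul_delta_mx_cond.
by case: eqP => _; rewrite ?mulr1n ?mulr0n ?scaler0.
Qed.

Lemma mcycleE n (c : {ffun 'I_n.+1 -> medge nu E}) :
  is_mcycle src tgt c =
  all (fun s => mtgt tgt (c (inord s)) == msrc src (c (inord s.+1))) (iota 0 n)
  && (msrc src (c (inord 0)) == mtgt tgt (c (inord n))).
Proof.
have fE : forall (j : 'I_n.+1) i, val j = i -> c j = c (inord i).
  by move=> j i <-; rewrite inord_val.
apply/forallP/andP.
  move=> h; split.
    apply/allP => s; rewrite mem_iota add0n => /andP[_ hs].
    have := h (inord s).
    rewrite (fE (ordS (inord s)) s.+1) //= inordK ?modn_small //; exact: ltnW.
  have := h (inord n); rewrite (fE (ordS (inord n)) 0) /=; last by rewrite inordK // modnn.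
  by rewrite eq_sym; apply.
case=> ha hl s; move/allP: ha => ha.
have [hs|hs] := ltnP s n.
  have := ha s; rewrite mem_iota add0n hs /= => /(_ isT).
  rewrite (fE s s) // (fE (ordS s) s.+1) //=; exact: modn_small.
have sn : val s = n by apply/eqP; rewrite eqn_leq hs andbT -ltnS ltn_ord.
rewrite (fE s n) // (fE (ordS s) 0) /=; first by rewrite eq_sym.
by rewrite sn modnn.
Qed.

Lemma prod_wt k n (c : {ffun 'I_n.+1 -> medge nu E}) :
  \prod_(s < n.+1) wt k (c s) =
  (cyc_omega src V c)%:C * expi (cyc_alpha alpha c + pairing (cyc_tau tau c) k).
Proof.
rewrite /wt big_split /= -rmorph_prod -(big_morph _ (@expiD R) (@expi0 R)) big_split /=.
by rewrite /cyc_omega /cyc_alpha /cyc_tau pairing_sum.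
Qed.

Lemma trHk k n :
  \tr ((Hk src tgt tau alpha V k) ^+ n.+1) =
  \sum_(c : {ffun 'I_n.+1 -> medge nu E} | is_mcycle src tgt c)
     (cyc_omega src V c)%:C * expi (cyc_alpha alpha c + pairing (cyc_tau tau c) k).
Proof.
have -> : (Hk src tgt tau alpha V k) ^+ n.+1 = \prod_(s < n.+1) Hk src tgt tau alpha V k.
  move: (Hk _ _ _ _ _ _) => M; elim: n.+1 => [|m IH]; first by rewrite big_ord0 expr0.
  by rewrite big_ord_recr /= -IH exprSr.
rewrite HkE bigA_distr_bigA /= raddf_sum [RHS]big_mkcond /=.
apply: eq_bigr => c _.
rewrite (eq_bigr (fun s : 'I_n.+1 => Ue k (c (inord s)))); last first.
  by move=> s _; rewrite inord_val.
rewrite (prodU k (fun s => c (inord s))) mcycleE.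
case: all => /=; last by rewrite mxtrace0.
rewrite mxtraceZ tr_delta -prod_wt.
rewrite (eq_bigr (fun s : 'I_n.+1 => wt k (c s))); last by move=> s _; rewrite inord_val.
by case: eqP => _; rewrite ?mulr1 ?mulr0.
Qed.

Lemma Hk_herm k : quotient_data_ok src tgt inv tau alpha ->
  Hk src tgt tau alpha V k \is hermsymmx.
Proof.
case=> invK _ hst htau halpha.
apply/is_hermitianmxP; rewrite expr0 scale1r; apply/matrixP => x y; rewrite !mxE.
have cE : forall z : R[i], (z^*)%R = conjc z by [].
rewrite cE [in RHS]rmorphD [in RHS]rmorph_sum; congr (_ + _).
  rewrite (reindex_inj (can_inj invK)) /=.
  apply: eq_big => [e|e _].
    by case: (hst e) => -> ->; rewrite andbC.
  rewrite halpha htau pairingN -opprD.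
  by rewrite /expi cosN sinN /=.
rewrite eq_sym; case: eqP => [->|_]; last by rewrite rmorph0.
exact: (esym (conjc_real _)).
Qed.

Lemma conj_term (x a : R) : (x%:C * expi a)^* = x%:C * expi (- a).
Proof.
rewrite /expi cosN sinN /=; apply/eqP; rewrite eq_complex /=.
by apply/andP; split; apply/eqP; ring.
Qed.

Definition ms0 n : seq 'rV[int]_d :=
  undup (0 :: [seq cyc_tau tau c | c <- enum {ffun 'I_n.+1 -> medge nu E}]).

Lemma ms0_uniq n : uniq (ms0 n). Proof. exact: undup_uniq. Qed.

Lemma ms0_tau n (c : {ffun 'I_n.+1 -> medge nu E}) : cyc_tau tau c \in ms0 n.
Proof. by rewrite mem_undup in_cons map_f ?mem_enum ?orbT. Qed.

Lemma ms0_0 n : 0 \in ms0 n.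
Proof. by rewrite mem_undup mem_head. Qed.

Lemma conj_trHk k n :
  (\tr ((Hk src tgt tau alpha V k) ^+ n.+1))^* =
  \sum_(m <- ms0 n) Tcoef src tgt tau alpha V n m * chi m k.
Proof.
rewrite trHk rmorph_sum.
transitivity (\sum_(c : {ffun 'I_n.+1 -> medge nu E} | is_mcycle src tgt c)
   (cyc_omega src V c)%:C * expi (- cyc_alpha alpha c) * chi (cyc_tau tau c) k).
  apply: eq_bigr => c _.
  apply: etrans (conj_term _ _) _.
  by rewrite opprD expiD /chi mulrA.
rewrite [RHS](eq_bigr (fun m => \sum_(c : {ffun 'I_n.+1 -> medge nu E} | is_mcycle src tgt c)
   if cyc_tau tau c == m then
   (cyc_omega src V c)%:C * expi (- cyc_alpha alpha c) * chi (cyc_tau tau c) k else 0)); last first.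
  move=> m _; rewrite /Tcoef mulr_suml big_mkcondr /=; apply: eq_bigr => c _.
  by case: eqP => [->|_]; rewrite ?mul0r.
rewrite exchange_big /=; apply: eq_bigr => c _.
rewrite (bigD1_seq (cyc_tau tau c)) ?ms0_uniq ?ms0_tau //= eqxx big1 ?addr0 //.
by move=> m hm; rewrite eq_sym (negbTE hm).
Qed.
End Graph.
Section Main.
Variables (R : realType) (nu d : nat) (E : finType).
Variables (src tgt : E -> 'I_nu) (inv : E -> E) (tau : E -> 'rV[int]_d)
  (alpha : E -> R) (V : 'I_nu -> R).
Hypothesis hok : quotient_data_ok src tgt inv tau alpha.

Local Notation A k := (Hk src tgt tau alpha V k).
Local Notation lamk k j := (lam src tgt tau alpha V k j).

Lemma hermA k : A k \is hermsymmx.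
Proof. exact: Hk_herm hok. Qed.

Lemma lam_cp k k' : char_poly (A k) = char_poly (A k') -> forall j, lamk k j = lamk k' j.
Proof. by move=> h j; rewrite /lam /sorted_spectrum h. Qed.

Lemma prodC_Ps (s : seq R) :
  \prod_(r <- s) ('X - (r%:C)%:P) = Ps [seq x%:C | x <- s].
Proof. by rewrite /Ps big_map. Qed.

Lemma spec_xget k : sorted_spectrum (A k) (xget [::] [set s | sorted_spectrum (A k) s]).
Proof.
apply: (@xgetI _ _ _ (sort <=%R (spec_list (A k)))).
split; first by apply: sort_sorted; exact: le_total.
rewrite herm_char ?hermA // prodC_Ps /Ps.
by apply: perm_big; apply: perm_map; rewrite perm_sym perm_sort.
Qed.

Lemma size_xget k : size (xget [::] [set s | sorted_spectrum (A k) s]) = nu.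
Proof.
have [_ h] := spec_xget k.
have := size_char_poly (A k); rewrite h prodC_Ps size_Ps size_map.
by case.
Qed.

Lemma cp_of_lam k k' : (forall j, (j < nu)%N -> lamk k j = lamk k' j) ->
  char_poly (A k) = char_poly (A k').
Proof.
move=> hl.
have sE : forall k, xget [::] [set s | sorted_spectrum (A k) s] = mkseq (fun j => lamk k j) nu.
  move=> k1; rewrite -{1}(mkseq_nth 0 (xget [::] [set s | sorted_spectrum (A k1) s])).
  by rewrite size_xget.
have [_ h1] := spec_xget k; have [_ h2] := spec_xget k'.
have e : mkseq (fun j => lamk k j) nu = mkseq (fun j => lamk k' j) nu.
  rewrite /mkseq; apply/eq_in_map => j; rewrite mem_iota add0n => /andP[_ hj]; exact: hl.
rewrite h1 h2 (sE k) (sE k') e.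
by [].
Qed.

Lemma tr_of_cp k k' r : char_poly (A k) = char_poly (A k') ->
  \tr (A k ^+ r) = \tr (A k' ^+ r).
Proof.
move=> h; rewrite (herm_tr r (hermA k)) (herm_tr r (hermA k')); apply: psum_Ps.
by rewrite -(herm_char (hermA k)) -(herm_char (hermA k')).
Qed.

Lemma cp_of_tr k k' : (forall r, (0 < r <= nu)%N -> \tr (A k ^+ r) = \tr (A k' ^+ r)) ->
  char_poly (A k) = char_poly (A k').
Proof.
move=> h; rewrite (herm_char (hermA k)) (herm_char (hermA k')); apply: Ps_psum.
  by rewrite /spec_list !size_map.
have szk : size (spec_list (A k)) = nu := size_spec_list (A k).
move=> r; rewrite size_map szk => hr.
by rewrite -(herm_tr r (hermA k)) -(herm_tr r (hermA k')); apply: h.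
Qed.
End Main.

Local Close Scope complex_scope.

Theorem lemma4p3 (R : realType) (nu d : nat) (E : finType)
    (src tgt : E -> 'I_nu) (inv : E -> E) (tau : E -> 'rV[int]_d)
    (alpha : E -> R) (V : 'I_nu -> R)
    (hd : (0 < d)%N)
    (hok : quotient_data_ok src tgt inv tau alpha)
    (hconn : pconnected src tgt tau) :
  (forall j : 'I_nu, band_degenerate src tgt tau alpha V j) <->
  (forall (n : 'I_nu) (m : 'rV[int]_d), m != 0 ->
     Tcoef src tgt tau alpha V n m = 0).
Proof.
pose k0 : 'I_d -> R := fun=> 0.
have chi0 : forall k : 'I_d -> R, chi (0 : 'rV[int]_d) k = 1.
  by move=> k; rewrite /chi pairing0 oppr0 expi0.
split.
  move=> hdeg n m m0.
  have hl : forall k j, (j < nu)%N ->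
      lam src tgt tau alpha V k j = lam src tgt tau alpha V k0 j.
    by move=> k j hj; have [c hc] := hdeg (Ordinal hj); rewrite !hc.
  have trc : forall k, conjc (\tr ((Hk src tgt tau alpha V k) ^+ n.+1)) =
                       conjc (\tr ((Hk src tgt tau alpha V k0) ^+ n.+1)).
    by move=> k; rewrite (@tr_of_cp R nu d E src tgt inv tau alpha V hok _ _ _
        (@cp_of_lam R nu d E src tgt inv tau alpha V hok _ _ (hl k))).
  have [hm|hm] := boolP (m \in ms0 nu tau n); last first.
    rewrite /Tcoef big1 // => c /andP[_ /eqP hc].
    by move: hm; rewrite -hc ms0_tau.
  pose a m' := Tcoef src tgt tau alpha V n m' -
    (if m' == 0 then conjc (\tr ((Hk src tgt tau alpha V k0) ^+ n.+1)) else 0).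
  have um : uniq (ms0 nu tau n) by exact: ms0_uniq.
  have := @artin R d (ms0 nu tau n) a um _ m hm.
  rewrite /a (negbTE m0) subr0; apply.
  move=> k.
  rewrite (eq_bigr (fun m' => Tcoef src tgt tau alpha V n m' * chi m' k -
     (if m' == 0 then conjc (\tr ((Hk src tgt tau alpha V k0) ^+ n.+1)) else 0) * chi m' k));
    last by move=> m' _; rewrite mulrBl.
  have ct : forall k1, \sum_(m' <- ms0 nu tau n) Tcoef src tgt tau alpha V n m' * chi m' k1
      = conjc (\tr ((Hk src tgt tau alpha V k1) ^+ n.+1)).
    by move=> k1; rewrite conj_trHk.
  rewrite sumrB ct trc (bigD1_seq 0) ?ms0_0 ?ms0_uniq //= eqxx big1 ?addr0.
    by rewrite chi0 mulr1 subrr.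
  by move=> m' hm'; rewrite (negbTE hm') mul0r.
move=> hT j; exists (lam src tgt tau alpha V k0 j) => k.
apply: lam_cp.
apply: (@cp_of_tr R nu d E src tgt inv tau alpha V hok) => r /andP[].
case: r => // n _ hn.
have e : forall k, conjc (\tr ((Hk src tgt tau alpha V k) ^+ n.+1)) =
                   Tcoef src tgt tau alpha V n 0.
  move=> k1; rewrite conj_trHk (bigD1_seq 0) ?ms0_0 ?ms0_uniq //= big1 ?addr0.
    by rewrite chi0 mulr1.
  by move=> m hm; rewrite (hT (Ordinal hn) m hm) mul0r.
by apply: (can_inj (@conjcK _)); rewrite !e.
Qed.
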